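(* Let $n$ and $s$ be integers with $\gcd(s,n)=1$. If $p(x)\in\mathcal L_{n,q}$ satisfies $p(x)=\lambda\, p(x)^{[s]}$ for some $\lambda\in\mathbb F_{q^n}^*$, then $p(x)$ has rank at most one, i.e. $p\in\mathcal U_1$.
   Context: $q$ is a prime power, $[i]:=q^i$. $\mathcal L_{n,q}$ is the set of linearized polynomials $f(x)=\sum_{i=0}^{n-1}a_ix^{[i]}$ with $a_i\in\mathbb F_{q^n}$, identified with the $\mathbb F_q$-linear maps of $\mathbb F_{q^n}$ they induce; the rank of $f$ is the $\mathbb F_q$-dimension of its image. For $f(x)=\sum_i a_ix^{[i]}$, $f(x)^{[s]}$ denotes $x^{[s]}\circ f(x)=\sum_{i=0}^{n-1}a_i^{[s]}x^{[(i+s)\bmod n]}$. $\mathcal U_1$ denotes the set of elements of $\mathcal L_{n,q}$ of rank at most one. *)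

(* Defs.v *)
From HB Require Import structures.
From mathcomp Require Import all_boot all_order all_algebra all_field.
Set Implicit Arguments. Unset Strict Implicit. Unset Printing Implicit Defensive.
Import GRing.Theory.
Local Open Scope ring_scope.

(* Setting: F = F_q (a finite field, q = #|F|), L = F_{q^n} a field extension
   of F of dimension n.  A linearized polynomial in L_{n,q} is given by its
   coefficient vector a : {ffun 'I_n -> L}, f(x) = \sum_i a_i x^[i].       *)

Section LinPoly.
Variables (F : finFieldType) (L : fieldExtType F).

Definition qpow (i : nat) (x : L) : L := x ^+ (#|F| ^ i).

Definition lpeval (n : nat) (a : {ffun 'I_n -> L}) (x : L) : L :=
  \sum_(i < n) a i * qpow i x.

Definition lprank (n : nat) (a : {ffun 'I_n -> L}) : nat :=
  \dim (limg (linfun (lpeval a))).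

Definition smod (n : nat) (s : int) : nat := absz (s %% n%:Z)%Z.

(* index i with (i + s) mod n = j, i.e. i = (j - s) mod n *)
Definition shift_src (n : nat) (s : int) (j : 'I_n) : 'I_n :=
  Ordinal (ltn_pmod (j + (n - smod n s)) (leq_ltn_trans (leq0n j) (ltn_ord j))).

(* f(x)^[s] = x^[s] o f(x) = \sum_i a_i^[s] x^[(i+s) mod n] *)
Definition lpfrob (n : nat) (s : int) (a : {ffun 'I_n -> L}) : {ffun 'I_n -> L} :=
  [ffun j => qpow (smod n s) (a (shift_src s j))].

End LinPoly.

(* Main.v *)
Require Import Defs.
From HB Require Import structures.
From mathcomp Require Import all_boot all_order all_algebra all_field all_fingroup all_solvable.
From mathcomp Require Import zify ring.
Import GRing.Theory.
Local Open Scope ring_scope.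

Section Helpers.
Variables (F : finFieldType) (L : fieldExtType F).

Lemma qpow_addn a b (x : L) : qpow (a + b) x = qpow a (qpow b x).
Proof. by rewrite /qpow expnD mulnC exprM. Qed.

Lemma qpowD i (x y : L) : qpow i (x + y) = qpow i x + qpow i y.
Proof.
have [p _ pc] := finPcharP F.
have pcL : p \in [pchar L] := rmorph_pchar (in_alg L) pc.
apply: exprDn_pchar; rewrite (eq_pnat _ (pcharf_eq pcL)) pnatX.
have := abelem_pgroup (fin_ring_pchar_abelem pc).
by rewrite /pgroup cardsT => ->.
Qed.

Lemma qpowM i (x y : L) : qpow i (x * y) = qpow i x * qpow i y.
Proof. by rewrite /qpow exprMn. Qed.

Lemma qpowF i (c : F) : c ^+ (#|F| ^ i) = c.
Proof.
elim: i => [|i IH]; first by rewrite expn0 expr1.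
by rewrite expnS mulnC exprM IH expf_card.
Qed.

Lemma qpowZ i (c : F) (x : L) : qpow i (c *: x) = c *: qpow i x.
Proof. by rewrite /qpow exprZn qpowF. Qed.

Lemma qpow0 i : qpow i (0 : L) = 0.
Proof.
have h : (0 < #|F| ^ i)%N by rewrite expn_gt0 (ltnW (finNzRing_gt1 F)).
by rewrite /qpow expr0n eqn0Ngt h.
Qed.

End Helpers.

Section H.
Variables (F : finFieldType) (L : fieldExtType F).
Local Notation n := (\dim {:L}).
Lemma qpow_dim (x : L) : qpow (\dim {:L}) x = x.
Proof.
have := Fermat's_little_theorem {:L}%AS x.
by rewrite memvf => /esym/eqP.
Qed.
Lemma qpow_mul k (x : L) : qpow (k * \dim {:L}) x = x.
Proof. by elim: k => [|k IH]; rewrite ?mul0n ?expn0 ?expr1 // mulSn qpow_addn qpow_dim. Qed.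
Lemma qpow_mod a b (x : L) : (a %% \dim {:L} = b %% \dim {:L})%N -> qpow a x = qpow b x.
Proof.
move=> h; rewrite (divn_eq a (\dim {:L})) (divn_eq b (\dim {:L})) h.
by rewrite addnC qpow_addn qpow_mul addnC qpow_addn qpow_mul.
Qed.
Lemma n_gt0 : (0 < n)%N.
Proof. exact: (adim_gt0 {:L}%AS). Qed.
Lemma smod_lt (s : int) : (smod n s < n)%N.
Proof.
have h1 := ltz_pmod s (n_gt0 : (0 < n%:Z)).
have h2 : (0 <= s %% n%:Z)%Z by apply: modz_ge0; rewrite eqz_nat -lt0n n_gt0.
rewrite /smod -ltz_nat gez0_abs //.
Qed.
Lemma src_inj (s : int) : injective (@shift_src n s).
Proof.
move=> j1 j2 /(congr1 val) /= /eqP; rewrite eqn_modDr => /eqP.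
by rewrite !modn_small // => /val_inj.
Qed.
Lemma src_val (s : int) (j : 'I_n) : ((smod n s + shift_src s j) %% n = j %% n)%N.
Proof.
rewrite /= modnDmr addnCA subnKC ?(ltnW (smod_lt s)) //.
by rewrite addnC modnDl.
Qed.
Lemma qpow1_alg (z : L) : qpow 1 z = z -> exists c : F, z = c%:A.
Proof.
move=> h; have := Fermat's_little_theorem 1%AS z.
rewrite dimv1 -/(qpow 1 z) h eqxx => /vlineP[c ->].
by exists c.
Qed.

Lemma key (s : int) (p : {ffun 'I_n -> L}) (lam : L)
  (hp : p = [ffun i => lam * lpfrob s p i]) x :
  lpeval p x = lam * qpow (smod n s) (lpeval p x).
Proof.
set s' := smod n s.
have E : lpeval p x = \sum_j lam * qpow s' (p (shift_src s j)) * qpow j x.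
  by rewrite {1}hp /lpeval; apply: eq_bigr => j _; rewrite ffunE /lpfrob ffunE.
rewrite {1}E /lpeval (big_morph (qpow s') (@qpowD F L s') (@qpow0 F L s')) mulr_sumr.
rewrite [RHS](reindex_inj (@src_inj s)) /=; apply: eq_bigr => j _.
rewrite qpowM -mulrA -qpow_addn; congr (_ * (_ * _)).
by apply: qpow_mod; rewrite src_val.
Qed.
Lemma fix1 (s' : nat) (z : L) : coprime s' n -> qpow s' z = z -> qpow 1 z = z.
Proof.
move=> cop hz.
have hk : forall k, qpow (k * s') z = z.
  by elim=> [|k IH]; rewrite ?mul0n ?expn0 ?expr1 // mulSn qpow_addn IH.
case: (posnP s') => [s0|s_gt0].
  move: cop; rewrite s0 /coprime gcd0n => /eqP n1.
  by rewrite -[in LHS]n1 qpow_dim.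
case: (egcdnP n s_gt0) => km kn E _.
move: E; rewrite /coprime in cop; rewrite (eqP cop) => E.
rewrite -[RHS](hk km) E; apply: qpow_mod.
by rewrite modnMDl.
Qed.

Lemma cop_smod (s : int) : coprimez s n%:Z -> coprime (smod n s) n.
Proof.
by rewrite /coprimez -gcdz_modl /smod.
Qed.
End H.

Section Lin.
Variables (F : finFieldType) (L : fieldExtType F) (n : nat) (a : {ffun 'I_n -> L}).
Lemma lpeval_lin : linear (lpeval a).
Proof.
move=> c x y; rewrite /lpeval scaler_sumr -big_split /=; apply: eq_bigr => i _.
by rewrite qpowD qpowZ mulrDr scalerAr.
Qed.
HB.instance Definition _ := GRing.isLinear.Build F L L *:%R (lpeval a) lpeval_lin.
Lemma lpevalE x : linfun (lpeval a) x = lpeval a x.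
Proof. by rewrite lfunE. Qed.
End Lin.

Theorem lemma3p3 (F : finFieldType) (L : fieldExtType F) (n : nat) (s : int)
  (hn : \dim {:L} = n) (hcop : coprimez s n%:Z)
  (p : {ffun 'I_n -> L}) (lam : L) (hlam : lam != 0)
  (hp : p = [ffun i => lam * lpfrob s p i]) :
  (lprank p <= 1)%N.
Proof.
subst n.
pose s' := smod (\dim {:L}) s.
have cop := @cop_smod F L s hcop.
have inV : forall y, y \in limg (linfun (lpeval p)) -> y = lam * qpow s' y.
  by move=> y /memv_imgP [x _ ->]; rewrite lfunE /=; exact: (@key F L s p lam hp x).
rewrite /lprank; set V := limg _.
have [V0|] := eqVneq V 0%VS; first by rewrite V0 dimv0.
rewrite -vpick0 => nz; set y1 := vpick V.
have y1V := memv_pick V; have e1 := inV _ y1V.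
suff: (V <= <[y1]>)%VS by move/dimvS; rewrite dim_vline nz.
apply/subvP => y yV; have ey := inV _ yV.
have Q : forall t, t \in V -> qpow s' t = lam^-1 * t.
  by move=> t /inV et; rewrite {2}et mulKf.
have Qy := Q _ yV; have Qy1 := Q _ y1V.
have hz : qpow s' (y / y1) = y / y1.
  rewrite qpowM /qpow exprVn -!/(qpow s' _) Qy Qy1.
  by rewrite -/y1; field; rewrite nz hlam.
have [c hc] := @qpow1_alg F L _ (@fix1 F L s' _ cop hz).
by apply/vlineP; exists c; rewrite -mulr_algl -hc mulfVK.
Qed.
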